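(* Let $n\ge3$. Every nonempty element of $K^{\infty}_n$ has a unique canonical form (its smallest representative word in length-lexicographic order with $y_1<\cdots<y_n$), and the canonical forms are exactly the words $$y^{a_0}_{i_1}y^{a_1}_{i_1-1}\cdots y^{a_{k_1}}_{i_1-k_1}\;y^{b_0}_{i_2}y^{b_1}_{i_2-1}\cdots y^{b_{k_2}}_{i_2-k_2}\cdots y^{h_0}_{i_p}y^{h_1}_{i_p-1}\cdots y^{h_{k_p}}_{i_p-k_p}$$ with all exponents positive and $i_j-k_j<i_{j+1}$ for $j=1,\dots,p-1$, where in addition, as a special case, a factor $y_n^{h}$ may be immediately followed by a factor $y_{n-2}^{j}$. Equivalently, the canonical forms are the words in which every two consecutive letters $y_ay_b$ satisfy $b\ge a-1$ or $(a,b)=(n,n-2)$.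
   Context: $K^{\infty}_n=\langle y_1,\dots,y_n\mid y_iy_j=y_jy_i\ (j+2\le i\le n-1),\ y_ny_k=y_ky_n\ (1\le k\le n-3)\rangle$. *)

(* Defs.v *)
From Stdlib Require Import Relation_Operators.
From mathcomp Require Import all_boot.
Set Implicit Arguments. Unset Strict Implicit. Unset Printing Implicit Defensive.

(* Letters: the generator y_i is encoded by the natural number i, 1 <= i <= n.
   Words are sequences of letters; a word over the alphabet of K^oo_n: *)
Definition word (n : nat) (w : seq nat) : bool := all (fun a => 0 < a <= n) w.

(* The defining relations of K^oo_n:
   y_i y_j = y_j y_i  for j+2 <= i <= n-1,
   y_n y_k = y_k y_n  for 1 <= k <= n-3. *)
Definition defrel (n i j : nat) : bool :=
  [&& 1 <= j, j + 2 <= i & i <= n - 1] || [&& i == n, 1 <= j & j <= n - 3].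

Definition step (n : nat) (u v : seq nat) : Prop :=
  exists (p q : seq nat) (a b : nat),
    (defrel n a b || defrel n b a) /\ u = p ++ a :: b :: q /\ v = p ++ b :: a :: q.

(* equality in the monoid K^oo_n: the congruence generated by the relations *)
Definition keq (n : nat) : seq nat -> seq nat -> Prop :=
  clos_refl_sym_trans (seq nat) (step n).

Fixpoint lexle (u v : seq nat) : bool :=
  match u, v with
  | [::], _ => true
  | _ :: _, [::] => false
  | a :: u', b :: v' => (a < b) || ((a == b) && lexle u' v')
  end.

Definition lenlex_le (u v : seq nat) : bool :=
  (size u < size v) || ((size u == size v) && lexle u v).

Definition canonical (n : nat) (c : seq nat) : Prop :=
  forall v, keq n c v -> lenlex_le c v.

Definition local_cond (n : nat) (c : seq nat) : bool :=
  [forall i : 'I_(size c).-1,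
     let a := nth 0 c i in let b := nth 0 c i.+1 in
     (a <= b.+1) || ((a == n) && (b == n - 2))].

(* Main.v *)
Require Import Defs.
From Stdlib Require Import Relation_Operators.
From mathcomp Require Import all_boot.
From mathcomp Require Import zify.
Set Implicit Arguments. Unset Strict Implicit.

Definition rr (n a b : nat) : bool := (a <= b.+1) || ((a == n) && (b == n - 2)).
Definition comm (n a b : nat) : bool := defrel n a b || defrel n b a.
Definition pr (a b z : nat) : bool := (z == a) || (z == b).
Definition projeq n (u v : seq nat) :=
  forall a b, ~~ comm n a b -> filter (pr a b) u = filter (pr a b) v.

Lemma comm_irr n a : ~~ comm n a a.
Proof. rewrite /comm /defrel; lia. Qed.

Lemma comm_sym n a b : comm n a b = comm n b a.
Proof. by rewrite /comm orbC. Qed.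

Lemma pairA n x y : rr n x y -> y < x -> comm n x y -> False.
Proof. rewrite /rr /comm /defrel; lia. Qed.

Lemma pairB n x z y : rr n x z -> z < y -> y < x -> comm n x y -> False.
Proof. rewrite /rr /comm /defrel; lia. Qed.

Lemma bad_defrel n x c : 0 < c -> x <= n -> ~~ rr n x c -> defrel n x c.
Proof. rewrite /rr /defrel; lia. Qed.

Lemma step_proj n u v : step n u v -> projeq n u v.
Proof.
move=> [p [q [a [b [Hab [-> ->]]]]]] x y Hxy.
rewrite !filter_cat /=.
have Hn : ~~ (pr x y a && pr x y b).
  apply/negP; rewrite /pr => /andP[Ha Hb].
  case/orP: Ha => /eqP Ha; case/orP: Hb => /eqP Hb; subst a b.
  - by move: Hab; rewrite -/(comm n x x) (negbTE (comm_irr n x)).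
  - by move: Hab; rewrite -/(comm n x y) (negbTE Hxy).
  - by move: Hab; rewrite -/(comm n y x) comm_sym (negbTE Hxy).
  - by move: Hab; rewrite -/(comm n y y) (negbTE (comm_irr n y)).
by case: (pr x y a) (pr x y b) Hn => [] [].
Qed.

Lemma keq_proj n u v : keq n u v -> projeq n u v.
Proof.
elim=> {u v} [u v /step_proj //|u|u v _ IH|u v w _ IH1 _ IH2] a b Hab //.
- by rewrite IH.
- by rewrite IH1 // IH2.
Qed.

Lemma keq_size n u v : keq n u v -> size u = size v.
Proof.
elim=> {u v} [u v [p [q [a [b [_ [-> ->]]]]]]|u|u v _ IH|u v w _ IH1 _ IH2] //.
- by rewrite !size_cat.
- by rewrite IH1.
Qed.

Lemma keq_cons n c u v : keq n u v -> keq n (c :: u) (c :: v).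
Proof.
elim=> {u v} [u v [p [q [a [b [H [-> ->]]]]]]|u|u v _ IH|u v w _ IH1 _ IH2].
- apply: rst_step; by exists (c :: p), q, a, b.
- exact: rst_refl.
- exact: rst_sym.
- exact: rst_trans IH1 IH2.
Qed.

Lemma noblock n s x y : path (rr n) x s -> y < x -> comm n x y ->
  (forall z, ~~ comm n z y -> exists t, filter (pr z y) (x :: s) = y :: t) -> False.
Proof.
elim: s x => [|z' s IH] x /=.
  move=> _ Hyx _ H; have [t] := H y (comm_irr n y).
  by rewrite /pr gtn_eqF.
move=> /andP[Hr Hp] Hyx Hc H.
case: (ltngtP z' y) => [Hlt|Hgt|Heq].
- exact: pairB Hr Hlt Hyx Hc.
- case Hcz: (comm n z' y).
    apply: (IH z' Hp Hgt Hcz) => z Hz.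
    have [t] := H z Hz; rewrite /=.
    case: ifP => [_ [] /eqP|_ Ht]; first by rewrite gtn_eqF.
    by exists t.
  have [t] := H z' (negbT Hcz); rewrite /= /pr.
  rewrite [z' == z']eqxx /=.
  case: ifP => _ [] Hh.
    by move: Hyx; rewrite Hh ltnn.
  by move: Hgt; rewrite Hh ltnn.
- by subst z'; exact: pairA Hr Hyx Hc.
Qed.

Lemma key n c : sorted (rr n) c -> forall v, projeq n c v -> lexle c v.
Proof.
elim: c => [|x c IH] // Hs [|y v] Hp.
  by have := Hp x x (comm_irr n x); rewrite /= /pr eqxx.
case: (eqVneq x y) Hp => [<-|Hxy] Hp /=.
  rewrite ltnn eqxx /=; apply: IH; first exact: path_sorted Hs.
  move=> a b Hab; have := Hp a b Hab; rewrite /=.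
  by case: ifP => _ // [].
case: (ltngtP x y) Hxy => // Hyx Hxy; exfalso.
have Hc : comm n x y.
  apply/negPn/negP => Hn; have := Hp x y Hn.
  by rewrite /= /pr !eqxx /= orbT => -[] Hh; move: Hyx; rewrite Hh ltnn.

apply: (@noblock n c x y Hs Hyx Hc) => z Hz.
rewrite (Hp z y Hz).
rewrite /= /pr eqxx orbT.
by eexists.
Qed.

Lemma sorted_canon n c : sorted (rr n) c -> canonical n c.
Proof.
move=> Hs v Hk; rewrite /lenlex_le (keq_size Hk) ltnn eqxx /=.
exact: key Hs v (keq_proj Hk).
Qed.

Fixpoint ins (n x : nat) (t : seq nat) : seq nat :=
  match t with
  | [::] => [:: x]
  | c :: t' => if rr n x c then x :: t else c :: ins n x t'
  end.

Fixpoint nf (n : nat) (s : seq nat) : seq nat :=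
  match s with [::] => [::] | x :: s' => ins n x (nf n s') end.

Lemma all_ins (P : pred nat) n x t : all P (ins n x t) = P x && all P t.
Proof.
elim: t => [|c t IH] //=; case: ifP => _ //=.
by rewrite IH andbCA.
Qed.

Lemma all_nf (P : pred nat) n s : all P (nf n s) = all P s.
Proof. by elim: s => [|x s IH] //=; rewrite all_ins IH. Qed.

Lemma rr_lt n x c : ~~ rr n x c -> c < x.
Proof. rewrite /rr; lia. Qed.

Lemma rr_of_lt n c x : c < x -> rr n c x.
Proof. rewrite /rr; lia. Qed.

Lemma ins_path n x b t : path (rr n) b t -> rr n b x -> path (rr n) b (ins n x t).
Proof.
elim: t b => [|c t IH] b /=; first by rewrite andbT.
move=> /andP[Hbc Hp] Hbx; case: ifP => Hxc /=.
  by rewrite Hbx Hxc Hp.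
rewrite Hbc /=; apply: IH Hp _; exact: rr_of_lt (rr_lt (negbT Hxc)).
Qed.

Lemma ins_sorted n x t : sorted (rr n) t -> sorted (rr n) (ins n x t).
Proof.
case: t => [|c t] //= Hp; case: ifP => Hxc /=; first by rewrite Hxc.
apply: ins_path Hp _; exact: rr_of_lt (rr_lt (negbT Hxc)).
Qed.

Lemma nf_sorted n s : sorted (rr n) (nf n s).
Proof. by elim: s => [|x s IH] //=; apply: ins_sorted. Qed.

Lemma keq_ins n x t : word n (x :: t) -> keq n (x :: t) (ins n x t).
Proof.
elim: t => [|c t IH] /=; first by move=> _; exact: rst_refl.
move=> /and3P[Hx /andP[Hc0 Hcn] Ht]; case: ifP => Hxc; first exact: rst_refl.
apply: (@rst_trans _ _ _ (c :: x :: t)).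
  apply: rst_step; exists [::], t, x, c; split=> //.
  rewrite (@bad_defrel n x c) //; [by case/andP: Hx| by rewrite Hxc].
apply: keq_cons; apply: IH; by rewrite /= Hx Ht.
Qed.

Lemma keq_nf n s : word n s -> keq n s (nf n s).
Proof.
elim: s => [|x s IH] /=; first by move=> _; exact: rst_refl.
move=> /andP[Hx Hs]; apply: (@rst_trans _ _ _ (x :: nf n s)).
  exact: keq_cons (IH Hs).
apply: keq_ins; by rewrite /word /= Hx all_nf.
Qed.

Lemma canon_cons n x c : canonical n (x :: c) -> canonical n c.
Proof.
move=> H v Hk; have := H _ (keq_cons x Hk).
by rewrite /lenlex_le /= ltnS eqSS ltnn eqxx.
Qed.

Lemma canon_sorted n c : word n c -> canonical n c -> sorted (rr n) c.
Proof.
elim: c => [|x c IH] //; case: c IH => [|y c] //= IH /and3P[Hx /andP[Hy0 Hyn] Hc] Hcan.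
case Hxy: (rr n x y) => /=.
  apply: IH; first by rewrite /word /= Hy0 Hyn.
  exact: canon_cons Hcan.
have Hk : keq n [:: x, y & c] [:: y, x & c].
  apply: rst_step; exists [::], c, x, y; split=> //.
  rewrite (@bad_defrel n x y) //; [by case/andP: Hx| by rewrite Hxy].
have := Hcan _ Hk; rewrite /lenlex_le /= ltnn eqxx /=.
have := rr_lt (negbT Hxy) => Hlt.
by rewrite ltnNge (ltnW Hlt) /= (gtn_eqF Hlt).
Qed.

Lemma lc_sorted n c : c != [::] -> local_cond n c = sorted (rr n) c.
Proof.
case: c => [|x s] // _; rewrite /local_cond /=.
apply/forallP/(pathP 0) => H.
  move=> i Hi; exact: (H (Ordinal Hi)).
move=> i; exact: H (ltn_ord i).
Qed.

Lemma lexle_anti u v : lexle u v -> lexle v u -> u = v.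
Proof.
elim: u v => [|a u IH] [|b v] //=.
case: (ltngtP a b) => //= -> H1 H2; by rewrite (IH v H1 H2).
Qed.

Theorem proposition2 (n : nat) (hn : 3 <= n) :
  (forall w : seq nat, word n w -> w != [::] ->
     exists! c : seq nat, keq n w c /\ canonical n c)
  /\
  (forall c : seq nat, word n c -> c != [::] ->
     (canonical n c <-> local_cond n c)).
Proof.
split.
  move=> w Hw _; exists (nf n w); split.
    split; first exact: keq_nf.
    exact: sorted_canon (nf_sorted n w).
  move=> c [Hk Hc].
  have Hk' : keq n (nf n w) c.
    apply: rst_trans Hk; apply: rst_sym; exact: keq_nf.
  have H1 := sorted_canon (nf_sorted n w) Hk'.
  have H2 := Hc _ (@rst_sym _ _ _ _ Hk').
  move: H1 H2; rewrite /lenlex_le (keq_size Hk') ltnn eqxx /=.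
  exact: lexle_anti.
move=> c Hw Hne; rewrite lc_sorted //; split.
  exact: canon_sorted.
exact: sorted_canon.
Qed.
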